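(* Let $p\in(0,1)$ and let $G=(V,E)$ be an undirected graph with $n=|V|$, $m=|E|$. Consider the $\ell_p$ QRJA instance $\mathcal I(G)$ constructed from $G$. Then every optimal solution $\mathbf x$ of $\mathcal I(G)$ satisfies, after a global constant shift making $x_{v^{(s)}}=0$: $x_{v^{(t)}}=1$ and $x_u\in\{0,1\}$ for every $u\in V$.
   Context: An $\ell_p$ QRJA instance consists of candidates, judgments $(a,b,y)$ (''$a$ is better than $b$ by $y$'') with nonnegative weights, and a solution $\mathbf x$ assigns a real number $x_a$ to each candidate $a$; its loss is $\sum w\,|x_a-x_b-y|^p$ summed over the weighted judgments $(a,b,y)$ with weight $w$; optimal solutions minimize the loss (the loss is invariant under adding a common constant to all coordinates). Construction of $\mathcal I(G)$: let $w_2=\frac{2n}{1-p}+1$ and $w_1=nw_2+1$. The candidates are $V\cup\{v^{(s)},v^{(t)}\}$ (two new candidates). The judgments are: $(v^{(t)},v^{(s)},1)$ with weight $w_1$; $(v^{(s)},u,0)$ with weight $w_2$ for each $u\in V$; $(v^{(t)},u,0)$ with weight $w_2$ for each $u\in V$; and both $(u,v,1)$ and $(v,u,1)$ with weight $1$ for each edge $\{u,v\}\in E$. *)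

(* Defs.v *)
From mathcomp Require Import all_boot all_order all_algebra.
From mathcomp Require Import all_classical all_reals all_analysis.
Set Implicit Arguments. Unset Strict Implicit. Unset Printing Implicit Defensive.
Import Order.TTheory GRing.Theory Num.Theory.
Local Open Scope ring_scope.

(* A weighted judgment (a, b, y) with weight w : "a is better than b by y". *)
Record judgment (R : realType) (C : Type) := Judgment {
  j_a : C; j_b : C; j_y : R; j_w : R }.

Definition qrja_loss (R : realType) (C : Type) (p : R)
    (J : seq (judgment R C)) (x : C -> R) : R :=
  \sum_(j <- J) j_w j * (`| x (j_a j) - x (j_b j) - j_y j | `^ p).

Definition qrja_optimal (R : realType) (C : Type) (p : R)
    (J : seq (judgment R C)) (x : C -> R) : Prop :=
  forall x' : C -> R, qrja_loss p J x <= qrja_loss p J x'.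

Inductive cand (V : Type) := Vs | Vt | Vert of V.
Arguments Vs {V}. Arguments Vt {V}.

(* A simple undirected graph on a finite vertex type V is given by a symmetric
   irreflexive relation e; each edge {u,v} appears as both (u,v) and (v,u). *)
Definition w2_of (R : realType) (V : finType) (p : R) : R :=
  2 * #|V|%:R / (1 - p) + 1.
Definition w1_of (R : realType) (V : finType) (p : R) : R :=
  #|V|%:R * w2_of V p + 1.

Definition instI (R : realType) (V : finType) (e : rel V) (p : R)
    : seq (judgment R (cand V)) :=
  [:: Judgment Vt Vs 1 (w1_of V p)]
  ++ [seq Judgment Vs (Vert u) 0 (w2_of V p) | u <- enum V]
  ++ [seq Judgment Vt (Vert u) 0 (w2_of V p) | u <- enum V]
  ++ [seq Judgment (Vert uv.1) (Vert uv.2) 1 1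
        | uv <- enum [pred uv : V * V | e uv.1 uv.2]].

(* Main.v *)
Require Import Defs.
From mathcomp Require Import all_boot all_order all_algebra.
From mathcomp Require Import all_classical all_reals all_analysis.
From mathcomp Require Import ring lra.
Import Order.TTheory GRing.Theory Num.Theory.
Local Open Scope ring_scope.

Section H.
Variable R : realType.
Implicit Types a b c y z : R.

Lemma powR_subadd_nneg (p a b : R) : 0 < p -> p <= 1 -> 0 <= a -> 0 <= b ->
  (a + b) `^ p <= a `^ p + b `^ p.
Proof.
move=> p0 p1 a0 b0.
have [s0|] := eqVneq (a + b) 0.
  have a00 : a = 0 by lra.
  have b00 : b = 0 by lra.
  by rewrite s0 powR0 ?gt_eqF // addr_ge0 // powR_ge0.
move=> sn0; have sp : 0 < a + b by lra.
set s := a + b.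
have key : forall t, 0 <= t -> t <= s -> t / s * s `^ p <= t `^ p.
  move=> t t0 ts.
  have [->|tn0] := eqVneq t 0; first by rewrite !mul0r powR_ge0.
  have tp : 0 < t by lra.
  have -> : t `^ p = (t / s) `^ p * s `^ p.
    rewrite -powRM ?divfK ?gt_eqF // ?divr_ge0 // ?ltW //.
    idtac.
  rewrite ler_wpM2r ?powR_ge0 //; apply: ger1_powR => //.
  by rewrite divr_gt0 //= ler_pdivrMr // mul1r.
have e1 : a / s * s `^ p + b / s * s `^ p = s `^ p.
  by rewrite -mulrDl -mulrDl divff ?mul1r // gt_eqF.
rewrite -{1}e1; apply: lerD; [apply: key|apply: key] => //; rewrite /s; lra.
Qed.

Lemma powR_subadd (p y z : R) : 0 < p -> p <= 1 ->
  `|y + z| `^ p <= `|y| `^ p + `|z| `^ p.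
Proof.
move=> p0 p1; have := (@powR_subadd_nneg p _ _ p0 p1 (normr_ge0 y) (normr_ge0 z)); apply: le_trans.
apply: ge0_ler_powR; [exact: ltW | by rewrite nnegrE | by rewrite nnegrE addr_ge0 | exact: ler_normD].
Qed.

Lemma powR_tri (p a b : R) : 0 < p -> p <= 1 ->
  `|a| `^ p <= `|b| `^ p + `|a - b| `^ p.
Proof.
move=> p0 p1; have := @powR_subadd p b (a - b) p0 p1.
by rewrite addrC subrK.
Qed.

Lemma bernoulli_powR (p a : R) : 0 <= p -> p <= 1 -> 0 <= a ->
  (1 + a) `^ p <= 1 + p * a.
Proof.
move=> p0 p1 a0.
have a1 : 0 < 1 + a by lra.
set L := ln (1 + a).
have G : (1 + a) `^ p = expR (p * L) by rewrite /powR gt_eqF.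
have e1 := expR_ge1Dx (- (p * L)).
have e2 := expR_ge1Dx ((1 - p) * L).
have E1 : expR (- (p * L)) * (1 + a) `^ p = 1 by rewrite G -expRD addNr expR0.
have E2 : expR ((1 - p) * L) * (1 + a) `^ p = 1 + a.
  by rewrite G -expRD mulrBl mul1r subrK /L lnK // posrE.
have Gp : 0 <= (1 + a) `^ p by exact: powR_ge0.
have h : 1 <= (1 - p) * expR (- (p * L)) + p * expR ((1 - p) * L).
  have h1 : (1 - p) * (1 + - (p * L)) <= (1 - p) * expR (- (p * L)).
    by apply: ler_wpM2l => //; lra.
  have h2 : p * (1 + (1 - p) * L) <= p * expR ((1 - p) * L).
    by apply: ler_wpM2l.
  have : (1 - p) * (1 + - (p * L)) + p * (1 + (1 - p) * L) = 1 by ring.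
  lra.
have := ler_wpM2r Gp h.
rewrite mul1r mulrDl -!mulrA E1 E2; lra.
Qed.

Lemma keyK (p c : R) : 0 < p -> p <= 1 -> 0 < c -> c <= 1 / 2 ->
  1 <= p * c `^ p + (1 - c) `^ p.
Proof.
move=> p0 p1 c0 c2.
have c1 : 0 < 1 - c by lra.
set a := c / (1 - c).
have a0 : 0 < a by rewrite divr_gt0.
have a1 : a <= 1 by rewrite ler_pdivrMr // mul1r; lra.
have hB := @bernoulli_powR p a (ltW p0) p1 (ltW a0).
have hA : a <= a `^ p by apply: ger1_powR => //; rewrite a0.
have e1 : (1 - c) * (1 + a) = 1 by rewrite /a mulrDr mulr1 mulrCA divff ?gt_eqF // mulr1; ring.
have e2 : (1 - c) * a = c by rewrite /a mulrCA divff ?gt_eqF // mulr1.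
have q1 : (1 - c) `^ p * (1 + a) `^ p = 1 by rewrite -powRM ?e1 ?powR1 //; lra.
have q2 : (1 - c) `^ p * a `^ p = c `^ p by rewrite -powRM ?e2 //; lra.
have Cp : 0 <= (1 - c) `^ p by exact: powR_ge0.
have h : (1 + a) `^ p <= 1 + p * a `^ p.
  apply: le_trans hB _; rewrite lerD2l; apply: ler_wpM2l => //; exact: ltW.
have := ler_wpM2l Cp h.
rewrite q1 mulrDr mulr1 mulrCA q2; lra.
Qed.


Lemma keyA (p N c : R) : 0 < p -> p < 1 -> 0 <= N -> c <= 1 / 2 -> c != 0 ->
  (2 * N / (1 - p) + 1) + 2 * N * `|c| `^ p <
  (2 * N / (1 - p) + 1) * (`|c| `^ p + `|1 - c| `^ p).
Proof.
move=> p0 p1 N0 c2 cn0.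
set W := 2 * N / (1 - p) + 1.
have q0 : 0 < 1 - p by lra.
have WE : W * (1 - p) = 2 * N + (1 - p).
  by rewrite /W mulrDl mul1r divfK ?gt_eqF.
have D0 : 0 <= 2 * N / (1 - p) by rewrite divr_ge0 // ?mulr_ge0 // ltW.
have W0 : 0 < W by rewrite /W; lra.
have Pp : 0 < `|c| `^ p by rewrite powR_gt0 // normr_gt0.
have [cneg|cpos] := ltP c 0.
  have Q1 : 1 <= `|1 - c| `^ p.
    have e : (1 : R) `^ p = 1 by rewrite powR1.
    rewrite -[X in X <= _]e.
    apply: ge0_ler_powR; [exact: (ltW p0) | by rewrite nnegrE | by rewrite nnegrE |].
    by rewrite ger0_norm; lra.
  have h1 : W * 1 <= W * `|1 - c| `^ p by apply: ler_wpM2l; [exact: (ltW W0) | exact: Q1].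
  rewrite mulr1 in h1.
  have W2 : 2 * N < W.
    have : 2 * N <= 2 * N / (1 - p).
      by rewrite ler_pdivlMr // ler_piMr //; lra.
    rewrite /W; lra.
  have h2 : 2 * N * `|c| `^ p < W * `|c| `^ p by rewrite ltr_pM2r.
  rewrite mulrDr; lra.
have cp : 0 < c by rewrite lt_neqAle eq_sym cn0 cpos.
have K := @keyK p c p0 (ltW p1) cp c2.
rewrite ger0_norm ?ltW // ger0_norm; last by lra.
have h : W * (1 - p * c `^ p) <= W * (1 - c) `^ p by apply: ler_wpM2l; [exact: (ltW W0) | lra].
have : W * (1 - p * c `^ p) = W - W * c `^ p + (W * (1 - p)) * c `^ p.
  ring.
rewrite WE => E.
have Pp' : 0 < c `^ p by rewrite powR_gt0.
have : 0 < (1 - p) * c `^ p by rewrite mulr_gt0.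
rewrite mulrDr mulrDl; lra.
Qed.

End H.

Lemma lossE (R : realType) (V : finType) (e : rel V) (p : R) (x : cand V -> R) :
 qrja_loss p (instI e p) x =
   w1_of V p * `|x Vt - x Vs - 1| `^ p
 + \sum_(u : V) w2_of V p * `|x Vs - x (Vert u) - 0| `^ p
 + \sum_(u : V) w2_of V p * `|x Vt - x (Vert u) - 0| `^ p
 + \sum_(ab : V * V | e ab.1 ab.2) 1 * `|x (Vert ab.1) - x (Vert ab.2) - 1| `^ p.
Proof.
rewrite /qrja_loss /instI /= big_cons !big_cat /= !big_map !big_enum /=.
rewrite !addrA; congr (_ + _ + _ + _).
Qed.

Lemma w2_gt0 (R : realType) (V : finType) (p : R) : p < 1 -> 0 < w2_of V p.
Proof.
move=> p1; rewrite /w2_of.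
have : 0 <= 2 * #|V|%:R / (1 - p) by rewrite divr_ge0 // ?mulr_ge0 //; lra.
lra.
Qed.

Lemma claim1 (R : realType) (p : R) (V : finType) (e : rel V)
    (hp0 : 0 < p) (hp1 : p < 1)
    (x : cand V -> R) (hopt : qrja_optimal p (instI e p) x) :
  x Vt - x Vs = 1.
Proof.
pose x' := fun k => match k with Vt => x Vs + 1 | _ => x k end.
have := hopt x'; rewrite !lossE /=.
set d := `|x Vt - x Vs - 1| `^ p.
set S := \sum_(u : V) _.
set E := \sum_(ab : V * V | _) _.
set N : R := #|V|%:R.
set w2 := w2_of V p.
have w20 : 0 < w2 by exact: w2_gt0.
have H0 : `|x Vs + 1 - x Vs - 1| `^ p = 0.
  have -> : x Vs + 1 - x Vs - 1 = 0 by ring.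
  by rewrite normr0 powR0 // gt_eqF.
rewrite H0 mulr0 add0r.
have HT : \sum_(u : V) w2 * `|x Vs + 1 - x (Vert u) - 0| `^ p <=
          \sum_(u : V) w2 * `|x Vt - x (Vert u) - 0| `^ p + N * (w2 * d).
  apply: le_trans.
    apply: (@ler_sum _ _ _ _ _ (fun u => w2 * `|x Vt - x (Vert u) - 0| `^ p + w2 * d)).
    move=> u _; rewrite -mulrDr; apply: ler_wpM2l; first exact: ltW.
    have := @powR_tri R p (x Vs + 1 - x (Vert u) - 0) (x Vt - x (Vert u) - 0) hp0 (ltW hp1).
    have -> : `|x Vs + 1 - x (Vert u) - 0 - (x Vt - x (Vert u) - 0)| = `|x Vt - x Vs - 1|.
      by rewrite -normrN; congr (`| _ |); ring.
    by [].
  by rewrite big_split /= sumr_const mulr_natl.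
have w1E : w1_of V p * d = N * (w2 * d) + d by rewrite /w1_of -/N -/w2; ring.
move=> hle.
have d0 : 0 <= d by exact: powR_ge0.
have dz : d = 0 by lra.
move: dz => /powR_eq0_eq0 /eqP; rewrite normr_eq0 => /eqP; lra.
Qed.

Lemma count_pairs (R : realType) (V : finType) (u0 : V) :
  \sum_(ab : V * V) (((ab.1 == u0)%:R : R) + (ab.2 == u0)%:R) = 2 * #|V|%:R.
Proof.
rewrite -(pair_big xpredT xpredT (fun a b => (((a == u0)%:R : R) + (b == u0)%:R))) /=.
have h1 : forall a : V, \sum_(b : V) (((a == u0)%:R : R) + (b == u0)%:R) =
   (a == u0)%:R * #|V|%:R + 1.
  move=> a; rewrite big_split /= sumr_const mulr_natr; congr (_ + _).
  by rewrite (bigD1 u0) //= eqxx big1 ?addr0 // => b /negbTE ->.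
rewrite (eq_bigr _ (fun a _ => h1 a)) big_split /= sumr_const -mulr_natr.
rewrite -big_distrl /= (bigD1 u0) //= eqxx big1 ?addr0; last by move=> b /negbTE ->.
rewrite (_ : (true%:R : R) = 1) //; ring.
Qed.

Lemma claim2 (R : realType) (p : R) (V : finType) (e : rel V)
    (hp0 : 0 < p) (hp1 : p < 1)
    (x : cand V -> R) (hopt : qrja_optimal p (instI e p) x)
    (hD : x Vt - x Vs = 1) (u0 : V) (c' : R)
    (hc' : `|c'| `^ p + `|1 - c'| `^ p = 1)
    (hlt : w2_of V p + 2 * #|V|%:R * `|(x (Vert u0) - x Vs) - c'| `^ p <
           w2_of V p * (`|x (Vert u0) - x Vs| `^ p + `|1 - (x (Vert u0) - x Vs)| `^ p)) :
  False.
Proof.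
set c := x (Vert u0) - x Vs in hlt.
set d := `|c - c'| `^ p in hlt.
pose x' := fun k => match k with Vert v => if v == u0 then x Vs + c' else x (Vert v) | _ => x k end.
have := hopt x'; rewrite !lossE /=.
set w2 := w2_of V p in hlt *.
set N : R := #|V|%:R in hlt *.
have w20 : 0 < w2 by exact: w2_gt0.
have d0 : 0 <= d by exact: powR_ge0.
rewrite (bigD1 u0) //= [X in _ <= _ + X + _ + _](bigD1 u0) //=.
rewrite [X in _ <= _ + _ + X + _](bigD1 u0) //= eqxx.
rewrite [X in _ + _ + X + _ <= _](bigD1 u0) //=.
set S := \sum_(u | u != u0) w2 * `|x Vs - x (Vert u) - 0| `^ p.
set T := \sum_(u | u != u0) w2 * `|x Vt - x (Vert u) - 0| `^ p.
have -> : \sum_(u | u != u0) w2 * `|x Vs - (if u == u0 then x Vs + c' else x (Vert u)) - 0| `^ p = S.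
  by apply: eq_bigr => u /negbTE ->.
have -> : \sum_(u | u != u0) w2 * `|x Vt - (if u == u0 then x Vs + c' else x (Vert u)) - 0| `^ p = T.
  by apply: eq_bigr => u /negbTE ->.
have e1 : `|x Vs - x (Vert u0) - 0| = `|c| by rewrite -normrN; congr (`|_|); rewrite /c; ring.
have e2 : `|x Vt - x (Vert u0) - 0| = `|1 - c|.
  by congr (`|_|); rewrite /c; rewrite -hD; ring.
have e3 : `|x Vs - (x Vs + c') - 0| = `|c'| by rewrite -normrN; congr (`|_|); ring.
have e4 : `|x Vt - (x Vs + c') - 0| = `|1 - c'|.
  by congr (`|_|); rewrite -hD; ring.
rewrite e1 e2 e3 e4.
set E := \sum_(ab | e ab.1 ab.2) 1 * `|x (Vert ab.1) - x (Vert ab.2) - 1| `^ p.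
have HE : \sum_(ab | e ab.1 ab.2)
     1 * `|(if ab.1 == u0 then x Vs + c' else x (Vert ab.1)) -
       (if ab.2 == u0 then x Vs + c' else x (Vert ab.2)) - 1| `^ p <= E + 2 * N * d.
  apply: le_trans.
    apply: (@ler_sum _ _ _ _ _ (fun ab : V * V => 1 * `|x (Vert ab.1) - x (Vert ab.2) - 1| `^ p
         + (((ab.1 == u0)%:R : R) + (ab.2 == u0)%:R) * d)).
    case=> a b _ /=; rewrite !mul1r.
    set y := x (Vert a) - x (Vert b) - 1.
    set y' := (if a == u0 then x Vs + c' else x (Vert a)) - (if b == u0 then x Vs + c' else x (Vert b)) - 1.
    apply: le_trans (@powR_tri R p y' y hp0 (ltW hp1)) _.
    rewrite lerD2l /y /y'.
    have z0 : (0 : R) `^ p = 0 by rewrite powR0 // gt_eqF.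
    case: (eqVneq a u0) => [->|na]; case: (eqVneq b u0) => [->|nb] /=.
    - have -> : x Vs + c' - (x Vs + c') - 1 - (x (Vert u0) - x (Vert u0) - 1) = 0 by ring.
      rewrite normr0 z0; lra.
    - have -> : x Vs + c' - x (Vert b) - 1 - (x (Vert u0) - x (Vert b) - 1) = - (c - c') by rewrite /c; ring.
      rewrite normrN -/d; lra.
    - have -> : x (Vert a) - (x Vs + c') - 1 - (x (Vert a) - x (Vert u0) - 1) = (c - c') by rewrite /c; ring.
      rewrite -/d; lra.
    - have -> : x (Vert a) - x (Vert b) - 1 - (x (Vert a) - x (Vert b) - 1) = 0 by ring.
      rewrite normr0 z0; lra.
  rewrite big_split /= lerD2l -big_distrl /= -(@count_pairs R V u0) -/N.
  rewrite big_distrl /= [X in _ <= X]big_distrl /=.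
  rewrite [X in _ <= X](bigID (fun ab : V * V => e ab.1 ab.2)) /= lerDl.
  by apply: sumr_ge0 => ab _; apply: mulr_ge0 => //; apply: addr_ge0.
move=> hle.
have : w2 * `|c'| `^ p + w2 * `|1 - c'| `^ p = w2 by rewrite -mulrDr hc' mulr1.
rewrite mulrDr in hlt.
lra.
Qed.

Theorem mainTheorem6 (R : realType) (p : R) (V : finType) (e : rel V)
    (hp0 : 0 < p) (hp1 : p < 1)
    (esym : symmetric e) (eirr : irreflexive e)
    (x : cand V -> R) (hopt : qrja_optimal p (instI e p) x) :
  x Vt - x Vs = 1 /\
  forall u : V, x (Vert u) - x Vs = 0 \/ x (Vert u) - x Vs = 1.
Proof.
have hD := @claim1 R p V e hp0 hp1 x hopt.
split => // u.
have z0 : (0 : R) `^ p = 0 by rewrite powR0 // gt_eqF.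
have o1 : (1 : R) `^ p = 1 by rewrite powR1.
have N0 : (0 : R) <= #|V|%:R by [].
case: (eqVneq (x (Vert u) - x Vs) 0) => [->|n0]; first by left.
case: (eqVneq (x (Vert u) - x Vs) 1) => [->|n1]; first by right.
exfalso.
have [c2|c2] := leP (x (Vert u) - x Vs) (1 / 2).
  have K := @keyA R p _ _ hp0 hp1 N0 c2 n0.
  apply: (@claim2 R p V e hp0 hp1 x hopt hD u 0).
    by rewrite subr0 normr0 normr1 z0 o1 add0r.
  by rewrite subr0 /w2_of.
have c2' : 1 - (x (Vert u) - x Vs) <= 1 / 2 by lra.
have n0' : 1 - (x (Vert u) - x Vs) != 0.
  by apply/eqP => h; move/eqP: n1; apply; lra.
have K := @keyA R p _ _ hp0 hp1 N0 c2' n0'.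
apply: (@claim2 R p V e hp0 hp1 x hopt hD u 1).
  by rewrite subrr normr0 normr1 z0 o1 addr0.
rewrite -normrN opprB /w2_of.
have e5 : 1 - (1 - (x (Vert u) - x Vs)) = x (Vert u) - x Vs by ring.
rewrite e5 in K; rewrite (addrC (`|x (Vert u) - x Vs| `^ p)); exact: K.
Qed.
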